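(* Let $g:\mathbb{R}^d\to\mathbb{R}$ be convex and twice differentiable, $\omega:\mathbb{R}_+\to\mathbb{R}_+$ increasing and continuously differentiable with $\omega'(s)\le\gamma\,\omega(s)/s$ for all $s>0$, where $\gamma\ge1$. Let $\alpha\in[0,1)$, $\delta\ge0$, $c>0$ with $8(\alpha+\frac1c)\gamma\le1$. Let $\tilde x\in\mathbb{R}^d$, let $y^*$ be the minimizer of $G(y)=g(y)+\int_0^{\|y-\tilde x\|}\omega(u)u\,du$, and let $y\in\mathbb{R}^d$ satisfy $\|\nabla g(y)+\omega(\|y-\tilde x\|)(y-\tilde x)\|\le\alpha\,\omega(\|y-\tilde x\|)\|y-\tilde x\|+\delta$ and $\omega(\|y-\tilde x\|)\|y-\tilde x\|\ge c\delta$. Then \[ \Big(1-8\big(\alpha+\tfrac1c\big)\gamma\Big)\|y-\tilde x\|\le\|y^*-\tilde x\|\le\Big(1+8\big(\alpha+\tfrac1c\big)\gamma\Big)\|y-\tilde x\|. \] *)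

(* Defs.v *)
From Stdlib Require Import Reals Lra ClassicalEpsilon.
Open Scope R_scope.

(* Vectors of R^d are represented as functions nat -> R whose coordinates
   with index >= d vanish (predicate [inRd d]). *)
Definition vec := nat -> R.

Definition inRd (d : nat) (x : vec) : Prop := forall i, (d <= i)%nat -> x i = 0.

Definition vadd (x y : vec) : vec := fun i => x i + y i.
Definition vsub (x y : vec) : vec := fun i => x i - y i.
Definition vscal (a : R) (x : vec) : vec := fun i => a * x i.

Fixpoint sumd (d : nat) (f : nat -> R) : R :=
  match d with O => 0 | S n => sumd n f + f n end.

Definition dot (d : nat) (x y : vec) : R := sumd d (fun i => x i * y i).
Definition norm (d : nat) (x : vec) : R := sqrt (dot d x x).

Definition convex_on_Rd (d : nat) (g : vec -> R) : Prop :=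
  forall x y t, inRd d x -> inRd d y -> 0 <= t <= 1 ->
    g (vadd (vscal t x) (vscal (1 - t) y)) <= t * g x + (1 - t) * g y.

Definition has_gradient (d : nat) (g : vec -> R) (x v : vec) : Prop :=
  inRd d v /\
  forall eps, 0 < eps -> exists del, 0 < del /\
    forall h, inRd d h -> norm d h < del ->
      Rabs (g (vadd x h) - g x - dot d v h) <= eps * norm d h.

Definition is_linear_Rd (d : nat) (L : vec -> vec) : Prop :=
  (forall h, inRd d h -> inRd d (L h)) /\
  (forall a h k, inRd d h -> inRd d k ->
     L (vadd (vscal a h) k) = vadd (vscal a (L h)) (L k)).

Definition has_derivative_map (d : nat) (F : vec -> vec) (x : vec) (L : vec -> vec) : Prop :=
  is_linear_Rd d L /\
  forall eps, 0 < eps -> exists del, 0 < del /\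
    forall h, inRd d h -> norm d h < del ->
      norm d (vsub (vsub (F (vadd x h)) (F x)) (L h)) <= eps * norm d h.

Definition twice_differentiable_with_grad (d : nat) (g : vec -> R) (grad : vec -> vec) : Prop :=
  (forall x, inRd d x -> has_gradient d g x (grad x)) /\
  (forall x, inRd d x -> exists Hx, has_derivative_map d grad x Hx).

(* Riemann integral of f over [a,b] (its value whenever f is Riemann integrable). *)
Definition Rint (f : R -> R) (a b : R) : R :=
  epsilon (inhabits 0) (fun I => exists pr : Riemann_integrable f a b, RiemannInt pr = I).

Definition Gfun (d : nat) (g : vec -> R) (omega : R -> R) (xt : vec) (y : vec) : R :=
  g y + Rint (fun u => omega u * u) 0 (norm d (vsub y xt)).

Definition is_minimizer_Rd (d : nat) (G : vec -> R) (ys : vec) : Prop :=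
  inRd d ys /\ forall z, inRd d z -> G ys <= G z.

Definition omega_ok (omega domega : R -> R) : Prop :=
  (forall s, 0 <= s -> 0 <= omega s) /\
  (forall s t, 0 <= s -> s < t -> omega s < omega t) /\
  (forall s, 0 < s -> derivable_pt_lim omega s (domega s)) /\
  (forall eps, 0 < eps -> exists del, 0 < del /\
     forall h, 0 < h < del -> Rabs ((omega h - omega 0) / h - domega 0) < eps) /\
  (forall s, 0 < s -> continuity_pt domega s) /\
  (forall eps, 0 < eps -> exists del, 0 < del /\
     forall h, 0 <= h < del -> Rabs (domega h - domega 0) < eps).

(* Main.v *)
From Coquelicot Require Import Coquelicot.
From Stdlib Require Import Reals Lra Psatz FunctionalExtensionality ClassicalEpsilon.
Require Import Defs.
Open Scope R_scope.

Section S.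
Variable om : R -> R.
Hypothesis om_nn : forall s, 0 <= s -> 0 <= om s.
Hypothesis om_inc : forall s t, 0 <= s -> s < t -> om s < om t.
Hypothesis om_cont : forall s, 0 < s -> continuity_pt om s.

Let m (u : R) := (u + Rabs u) / 2.
Let F (u : R) := om u * u.
Let F' (u : R) := om (m u) * m u.

Lemma m_pos u : 0 <= u -> m u = u.
Proof. intros. unfold m. rewrite Rabs_right; lra. Qed.
Lemma m_neg u : u <= 0 -> m u = 0.
Proof. intros. unfold m. rewrite Rabs_left1; lra. Qed.
Lemma m_nn u : 0 <= m u.
Proof. unfold m. pose proof (Rle_abs (-u)). rewrite Rabs_Ropp in H. lra. Qed.

Lemma om_le s t : 0 <= s -> s <= t -> om s <= om t.
Proof. intros. destruct (Req_dec s t). subst; lra. left; apply om_inc; lra. Qed.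

Lemma F'_cont u : continuity_pt F' u.
Proof.
destruct (Rlt_or_le 0 u) as [Hu|Hu].
- unfold F'. apply continuity_pt_mult.
  + change (fun x => om (m x)) with (comp om m).
    apply continuity_pt_comp.
    * unfold m. apply continuity_pt_mult. apply continuity_pt_plus.
      apply derivable_continuous_pt, derivable_pt_id. apply Rcontinuity_abs.
      apply continuity_pt_const. intros a b; reflexivity.
    * rewrite m_pos by lra. apply om_cont; lra.
  + unfold m. apply continuity_pt_mult. apply continuity_pt_plus.
      apply derivable_continuous_pt, derivable_pt_id. apply Rcontinuity_abs.
      apply continuity_pt_const. intros a b; reflexivity.
- intros eps Heps. simpl.
  pose proof (om_nn 1 ltac:(lra)) as H1.
  exists (Rmin 1 (eps / (om 1 + 1))). split.
  { apply Rmin_glb_lt. lra. apply Rdiv_lt_0_compat; lra. }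
  intros x [_ Hx]. simpl in *. unfold R_dist in *.
  unfold F'. rewrite (m_neg u Hu). rewrite Rmult_0_r.
  pose proof (Rmin_l 1 (eps / (om 1 + 1))). pose proof (Rmin_r 1 (eps / (om 1 + 1))).
  destruct (Rle_or_lt x 0) as [Hx0|Hx0].
  + rewrite m_neg by lra. rewrite Rmult_0_r. rewrite Rminus_0_r, Rabs_R0. lra.
  + rewrite m_pos by lra. 
    assert (Hxu : x <= Rabs (x - u)) by (rewrite Rabs_right; lra).
    assert (x < 1) by lra.
    assert (0 <= om x <= om 1) by (split; [apply om_nn; lra| apply om_le; lra]).
    rewrite Rminus_0_r, Rabs_right.
    2:{ apply Rle_ge, Rmult_le_pos; lra. }
    apply Rle_lt_trans with ((om 1) * x). apply Rmult_le_compat_r; lra.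
    assert (Hlt : (om 1 + 1) * x < (om 1 + 1) * (eps / (om 1 + 1))) by (apply Rmult_lt_compat_l; lra).
    replace ((om 1 + 1) * (eps / (om 1 + 1))) with eps in Hlt by (field; lra). lra.
Qed.

Lemma F_ex a b : 0 <= a -> 0 <= b -> ex_RInt F a b.
Proof.
intros Ha Hb. apply ex_RInt_ext with F'.
- intros x [Hx _]. unfold F, F'. rewrite m_pos; auto.
  apply Rle_trans with (Rmin a b); [apply Rmin_glb|]; lra.
- apply (ex_RInt_continuous (V:=R_CompleteNormedModule)). intros z _. apply continuity_pt_filterlim, F'_cont.
Qed.

Lemma lin_int k a b : RInt (fun u => k * u) a b = k * (b*b - a*a) / 2.
Proof.
apply is_RInt_unique.
assert (H := is_RInt_derive (V:=R_CompleteNormedModule) (fun u => k*(u*u)/2) (fun u => k*u) a b).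
replace (k * (b*b - a*a) / 2) with (minus ((fun u => k * (u*u) / 2) b) ((fun u => k * (u*u) / 2) a)).
2:{ unfold minus, plus, opp; simpl. field. }
apply H.
- intros x _. auto_derive. auto. field.
- intros x _. apply continuity_pt_filterlim.
  apply continuity_pt_mult. apply continuity_pt_const. intros p q; reflexivity.
  apply derivable_continuous_pt, derivable_pt_id.
Qed.

Lemma F_ex_nn a b : 0 <= a -> 0 <= b -> ex_RInt (fun u => om u * u) a b.
Proof. apply F_ex. Qed.

Lemma lin_ex k a b : ex_RInt (fun u => k * u) a b.
Proof.
apply (ex_RInt_continuous (V:=R_CompleteNormedModule)). intros z _. apply continuity_pt_filterlim.
apply continuity_pt_mult. apply continuity_pt_const. intros p q; reflexivity.
apply derivable_continuous_pt, derivable_pt_id.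
Qed.

Lemma I2 r s : 0 <= r -> 0 <= s ->
  RInt (fun u => om u * u) 0 s - RInt (fun u => om u * u) 0 r >= om r * (s*s - r*r) / 2.
Proof.
intros Hr Hs.
destruct (Rle_or_lt r s).
- pose proof (RInt_Chasles (V:=R_CompleteNormedModule) (fun u => om u * u) 0 r s (F_ex 0 r ltac:(lra) Hr) (F_ex r s Hr Hs)) as HC.
  unfold plus in HC; simpl in HC.
  assert (Hle : RInt (fun u => om r * u) r s <= RInt (fun u => om u * u) r s).
  { apply RInt_le; auto. apply lin_ex. apply F_ex; lra.
    intros x Hx. apply Rmult_le_compat_r. lra. apply om_le; lra. }
  rewrite lin_int in Hle. lra.
- pose proof (RInt_Chasles (V:=R_CompleteNormedModule) (fun u => om u * u) 0 s r (F_ex 0 s ltac:(lra) Hs) (F_ex s r Hs Hr)) as HC.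
  unfold plus in HC; simpl in HC.
  assert (Hle : RInt (fun u => om u * u) s r <= RInt (fun u => om r * u) s r).
  { apply RInt_le; try lra. apply F_ex; lra. apply lin_ex.
    intros x Hx. apply Rmult_le_compat_r. lra. apply om_le; lra. }
  rewrite lin_int in Hle. lra.
Qed.

Lemma I3 s : 0 < s -> 0 < RInt (fun u => om u * u) 0 s.
Proof.
intros Hs.
pose proof (RInt_Chasles (V:=R_CompleteNormedModule) (fun u => om u * u) 0 (s/2) s (F_ex 0 (s/2) ltac:(lra) ltac:(lra)) (F_ex (s/2) s ltac:(lra) ltac:(lra))) as HC.
unfold plus in HC; simpl in HC.
assert (H1 : RInt (fun u => 0 * u) 0 (s/2) <= RInt (fun u => om u * u) 0 (s/2)).
{ apply RInt_le; try lra. apply lin_ex. apply F_ex; lra.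
  intros x Hx. rewrite Rmult_0_l. apply Rmult_le_pos; try lra. apply om_nn; lra. }
assert (H2 : RInt (fun u => om (s/2) * u) (s/2) s <= RInt (fun u => om u * u) (s/2) s).
{ apply RInt_le; try lra. apply lin_ex. apply F_ex; lra.
  intros x Hx. apply Rmult_le_compat_r. lra. apply om_le; lra. }
rewrite lin_int in H1, H2.
assert (0 < om (s/2)). { apply Rle_lt_trans with (om 0). apply om_nn; lra. apply om_inc; lra. }
assert (0 < om (s/2) * (s * s - s / 2 * (s / 2)) / 2).
{ apply Rmult_lt_0_compat; [|lra]. apply Rmult_lt_0_compat; nra. }
lra.
Qed.

End S.


Lemma Rabs_lo x y : Rabs x <= y -> - y <= x.
Proof. intros H. pose proof (Rle_abs (-x)). rewrite Rabs_Ropp in H0. lra. Qed.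
Lemma Rabs_hi x y : Rabs x <= y -> x <= y.
Proof. intros H. pose proof (Rle_abs x). lra. Qed.

Lemma sumd_lin3 d f f1 f2 f3 a b c :
  (forall i, f i = a * f1 i + b * f2 i + c * f3 i) ->
  sumd d f = a * sumd d f1 + b * sumd d f2 + c * sumd d f3.
Proof. intros H. induction d; simpl. ring. rewrite IHd, H. ring. Qed.

Lemma sumd_nn d f : (forall i, 0 <= f i) -> 0 <= sumd d f.
Proof. intros H. induction d; simpl. lra. specialize (H d). lra. Qed.

Lemma dot_nn d x : 0 <= dot d x x.
Proof. apply sumd_nn. intros; apply Rle_0_sqr. Qed.

Lemma norm_nn d x : 0 <= norm d x.
Proof. apply sqrt_pos. Qed.

Lemma norm_sq d x : norm d x * norm d x = dot d x x.
Proof. apply sqrt_sqrt, dot_nn. Qed.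

Lemma real_cs A B C : 0 <= A -> 0 <= B -> (forall t, 0 <= A + 2 * t * C + t * t * B) -> C * C <= A * B.
Proof.
intros HA HB H.
destruct (Req_dec B 0).
- subst. destruct (Req_dec C 0). subst; lra.
  specialize (H (- (A + 1) / (2 * C))).
  replace (A + 2 * (- (A + 1) / (2 * C)) * C + - (A + 1) / (2 * C) * (- (A + 1) / (2 * C)) * 0) with (-1) in H by (field; try assumption). lra.
- specialize (H (- C / B)).
  replace (A + 2 * (- C / B) * C + - C / B * (- C / B) * B) with (A - C * C / B) in H by (field; try assumption).
  assert (0 < B) by lra.
  assert (HH : C * C / B * B <= A * B) by (apply Rmult_le_compat_r; lra).
  replace (C * C / B * B) with (C * C) in HH by (field; try assumption). lra.
Qed.

Lemma cs d a b : Rabs (dot d a b) <= norm d a * norm d b.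
Proof.
assert (Hc : dot d a b * dot d a b <= dot d a a * dot d b b).
{ apply real_cs; try apply dot_nn. intros t.
  assert (E : dot d (vadd a (vscal t b)) (vadd a (vscal t b)) = dot d a a + 2 * t * dot d a b + t * t * dot d b b).
  { unfold dot. rewrite (sumd_lin3 d _ (fun i => a i * a i) (fun i => a i * b i) (fun i => b i * b i) 1 (2*t) (t*t)). ring. intros i. unfold vadd, vscal. ring. }
  rewrite <- E. apply dot_nn. }
rewrite <- (sqrt_Rsqr_abs (dot d a b)). unfold norm. rewrite <- sqrt_mult by apply dot_nn.
apply sqrt_le_1_alt. unfold Rsqr. lra.
Qed.

Lemma tangent d g p y z : convex_on_Rd d g -> has_gradient d g y p -> inRd d y -> inRd d z ->
  g y + dot d p (vsub z y) <= g z.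
Proof.
intros Hc [Hp Hg] Hy Hz.
set (h := vsub z y). set (N := norm d h).
assert (HN : 0 <= N) by apply norm_nn.
destruct (Rle_or_lt (g y + dot d p h) (g z)) as [|Hlt]; auto.
exfalso. set (D := dot d p h - (g z - g y)).
assert (HD : 0 < D) by (unfold D; lra).
destruct (Hg (D / (N + 1))) as [del [Hdel Hd]]. apply Rdiv_lt_0_compat; lra.
set (t := Rmin 1 (del / (2 * (N + 1)))).
assert (Ht0 : 0 < t). { apply Rmin_glb_lt. lra. apply Rdiv_lt_0_compat; lra. }
assert (Ht1 : t <= 1) by apply Rmin_l.
assert (Ht2 : t <= del / (2 * (N + 1))) by apply Rmin_r.
assert (HinRd : inRd d (vscal t h)).
{ intros i Hi. unfold vscal, h, vsub. rewrite Hy, Hz by auto. ring. }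
assert (Hnorm : norm d (vscal t h) = t * N).
{ unfold N, norm. replace (dot d (vscal t h) (vscal t h)) with ((t * t) * dot d h h).
  rewrite sqrt_mult by (try apply dot_nn; nra). rewrite sqrt_square by lra. reflexivity.
  unfold dot. symmetry. rewrite (sumd_lin3 _ _ (fun i => h i * h i) (fun _ => 0) (fun _ => 0) (t*t) 0 0).
  simpl. ring. intros; unfold vscal; ring. }
assert (Hsm : norm d (vscal t h) < del).
{ rewrite Hnorm. apply Rle_lt_trans with (del / (2 * (N + 1)) * N).
  apply Rmult_le_compat_r; lra.
  apply Rlt_le_trans with (del / (2 * (N + 1)) * (N + 1)). apply Rmult_lt_compat_l.
  apply Rdiv_lt_0_compat; lra. lra. replace (del / (2 * (N + 1)) * (N + 1)) with (del/2) by (field; lra). lra. }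
specialize (Hd _ HinRd Hsm). rewrite Hnorm in Hd.
apply Rabs_lo in Hd.
assert (Hv : vadd y (vscal t h) = vadd (vscal t z) (vscal (1 - t) y)).
{ apply functional_extensionality. intros i. unfold vadd, vscal, h, vsub. ring. }
rewrite Hv in Hd.
pose proof (Hc z y t Hz Hy (conj (Rlt_le _ _ Ht0) Ht1)) as Hcv.
assert (Hdp : dot d p (vscal t h) = t * dot d p h).
{ unfold dot. rewrite (sumd_lin3 _ _ (fun i => p i * h i) (fun _ => 0) (fun _ => 0) t 0 0).
  simpl. ring. intros; unfold vscal; ring. }
rewrite Hdp in Hd.
assert (t * (g z - g y) >= t * (dot d p h - D / (N + 1) * N)) by nra.
assert (g z - g y >= dot d p h - D / (N + 1) * N).
{ apply Rle_ge. apply Rmult_le_reg_l with t; lra. }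
assert (D / (N + 1) * N < D).
{ apply Rlt_le_trans with (D / (N+1) * (N + 1)). apply Rmult_lt_compat_l.
  apply Rdiv_lt_0_compat; lra. lra. right; field; lra. }
unfold D in *. lra.
Qed.

Lemma Rint_RInt_eq (f : R -> R) a b (pr : Riemann_integrable f a b) : Rint f a b = RiemannInt pr.
Proof.
unfold Rint.
destruct (epsilon_spec (inhabits 0) (fun I => exists pr : Riemann_integrable f a b, RiemannInt pr = I)) as [pr' Hpr'].
exists (RiemannInt pr). exists pr. reflexivity.
rewrite <- Hpr'. apply RiemannInt_P5.
Qed.

Theorem mainTheorem18
  (d : nat) (g : vec -> R) (grad : vec -> vec)
  (omega domega : R -> R) (gamma alpha delta c : R)
  (xt ystar y : vec)
  (Hconv : convex_on_Rd d g)
  (Hg2 : twice_differentiable_with_grad d g grad)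
  (Homega : omega_ok omega domega)
  (Hgamma : 1 <= gamma)
  (Hratio : forall s, 0 < s -> domega s <= gamma * omega s / s)
  (Halpha : 0 <= alpha < 1)
  (Hdelta : 0 <= delta)
  (Hc : 0 < c)
  (Hsmall : 8 * (alpha + 1 / c) * gamma <= 1)
  (Hxt : inRd d xt)
  (Hystar : is_minimizer_Rd d (Gfun d g omega xt) ystar)
  (Hy : inRd d y)
  (Happrox : norm d (vadd (grad y) (vscal (omega (norm d (vsub y xt))) (vsub y xt)))
             <= alpha * omega (norm d (vsub y xt)) * norm d (vsub y xt) + delta)
  (Hlarge : omega (norm d (vsub y xt)) * norm d (vsub y xt) >= c * delta) :
  (1 - 8 * (alpha + 1 / c) * gamma) * norm d (vsub y xt) <= norm d (vsub ystar xt) /\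
  norm d (vsub ystar xt) <= (1 + 8 * (alpha + 1 / c) * gamma) * norm d (vsub y xt).
Proof.
destruct Homega as [om_nn [om_inc [om_der _]]].
assert (om_cont : forall s, 0 < s -> continuity_pt omega s).
{ intros s Hs. apply derivable_continuous_pt. exact (exist _ (domega s) (om_der s Hs)). }
destruct Hystar as [Hys Hmin]. specialize (Hmin y Hy).
destruct Hg2 as [Hgr _].
set (u := vsub y xt) in *. set (v := vsub ystar xt).
set (r := norm d u) in *. set (rs := norm d v).
set (om := omega r) in *.
set (e := vadd (grad y) (vscal om u)) in *.
set (w := vsub u v).
set (A := dot d u u). set (B := dot d v v). set (C := dot d u v).
set (E := dot d e w). set (W := dot d w w).
assert (HW : W = A + B - 2 * C).
{ unfold W, A, B, C, dot. rewrite (sumd_lin3 d _ (fun i => u i * u i) (fun i => v i * v i) (fun i => u i * v i) 1 1 (-2)). ring.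
  intros i. unfold w, vsub. ring. }
pose proof (tangent d g (grad y) y ystar Hconv (Hgr y Hy) Hy Hys) as Htan.
assert (Hdp : dot d (grad y) (vsub ystar y) = - E + om * (A - C)).
{ unfold E, A, C, dot. rewrite (sumd_lin3 d _ (fun i => e i * w i) (fun i => u i * u i) (fun i => u i * v i) (-1) om (-om)). ring.
  intros i. unfold e, w, u, v, vsub, vadd, vscal. ring. }
rewrite Hdp in Htan.
unfold Gfun in Hmin. fold u v in Hmin. fold r rs in Hmin.
assert (Hr0 : 0 <= r) by apply norm_nn. assert (Hrs0 : 0 <= rs) by apply norm_nn.
rewrite (Rint_RInt_eq _ _ _ (ex_RInt_Reals_0 _ _ _ (F_ex_nn omega om_nn om_inc om_cont 0 r ltac:(lra) Hr0))) in Hmin.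
rewrite (Rint_RInt_eq _ _ _ (ex_RInt_Reals_0 _ _ _ (F_ex_nn omega om_nn om_inc om_cont 0 rs ltac:(lra) Hrs0))) in Hmin.
rewrite <- !RInt_Reals in Hmin.
pose proof (I2 omega om_nn om_inc om_cont r rs Hr0 Hrs0) as HI2. fold om in HI2.
assert (HA : A = r * r) by (unfold r; rewrite norm_sq; reflexivity).
assert (HB : B = rs * rs) by (unfold rs; rewrite norm_sq; reflexivity).
set (sw := norm d w).
assert (HWs : W = sw * sw) by (unfold sw; rewrite norm_sq; reflexivity).
assert (Hsw0 : 0 <= sw) by apply norm_nn.
pose proof (cs d e w) as HcsE. fold E sw in HcsE. apply Rabs_hi in HcsE.
set (ne := norm d e) in *.
assert (Hne0 : 0 <= ne) by apply norm_nn.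
assert (Hdel : delta <= om * r * (1 / c)).
{ apply Rmult_le_reg_l with c. lra. replace (c * (om * r * (1 / c))) with (om * r) by (field; lra). lra. }
assert (Hom0 : 0 <= om) by (apply om_nn; lra).
set (eps := alpha + 1 / c) in *.
assert (Heps : 0 <= eps). { unfold eps. assert (0 < 1 / c) by (apply Rdiv_lt_0_compat; lra). lra. }
assert (Hne : ne <= eps * om * r) by (unfold eps; nra).
destruct (Rle_or_lt r 0) as [Hr | Hr].
- assert (Hr00 : r = 0) by lra.
  assert (HI0 : RInt (fun u0 : R => omega u0 * u0) 0 r = 0).
  { rewrite Hr00. apply (RInt_point (V:=R_CompleteNormedModule)). }
  assert (Hne00 : ne = 0) by nra.
  assert (HE0 : E <= 0) by nra.
  pose proof (cs d u v) as HC. fold C r rs in HC. rewrite Hr00, Rmult_0_l in HC.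
  assert (HC0 : C = 0). { pose proof (Rle_abs C) as Ha1. pose proof (Rle_abs (-C)) as Ha2. rewrite Rabs_Ropp in Ha2. lra. }
  assert (Hrs00 : rs = 0).
  { destruct (Rle_or_lt rs 0) as [Hq|Hq]. lra.
    pose proof (I3 omega om_nn om_inc om_cont rs Hq). nra. }
  rewrite Hr00, Hrs00. lra.
- assert (Hompos : 0 < om). { unfold om. apply Rle_lt_trans with (omega 0). apply om_nn; lra. apply om_inc; lra. }
  assert (Hkey : om * W / 2 <= E) by nra.
  assert (Hsw : sw <= 2 * eps * r).
  { destruct (Rle_or_lt sw 0). nra.
    assert (om * sw * sw / 2 <= eps * om * r * sw) by nra.
    assert (om * sw * (sw - 2 * eps * r) <= 0) by nra.
    assert (sw - 2 * eps * r <= 0).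
    { destruct (Rle_or_lt (sw - 2 * eps * r) 0); auto.
      assert (0 < om * sw * (sw - 2 * eps * r)). apply Rmult_lt_0_compat; auto. apply Rmult_lt_0_compat; auto. lra. }
    lra. }
  assert (HB2 : B = A - 2 * dot d u w + W).
  { unfold B, A, W, dot. rewrite (sumd_lin3 d _ (fun i => u i * u i) (fun i => u i * w i) (fun i => w i * w i) 1 (-2) 1). ring.
    intros i. unfold w, vsub. ring. }
  pose proof (cs d u w) as Huw. fold r sw in Huw.
  pose proof (Rle_abs (dot d u w)) as Hb1. pose proof (Rle_abs (- dot d u w)) as Hb2. rewrite Rabs_Ropp in Hb2.
  assert (rs * rs <= (r + sw) * (r + sw)) by nra.
  assert ((r - sw) * (r - sw) <= rs * rs) by nra.
  assert (rs <= r + sw) by nra.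
  assert (r - sw <= rs) by nra.
  assert (2 * eps <= 8 * eps * gamma) by nra.
  split; nra.
Qed.
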